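(* Let $q=2^h$ with $h\equiv 1\pmod 2$, and let $$U=\left\{\left(x,y,x^q+y^{q^2},x^{q^2}+y^q+y^{q^2}\right): x,y\in\mathbb F_{q^4}\right\},\qquad U'=\left\{\left(z,t,z^{q^3}+z^{q^2}+t^{q^2},z^{q^2}+t^{q^3}\right): z,t\in\mathbb F_{q^4}\right\}.$$ Then $U$ and $U'$ are $\mathrm{GL}(4,q^4)$-equivalent, i.e. there exists $A\in\mathrm{GL}(4,q^4)$ with $\{uA: u\in U\}=U'$.
   Context: $U'$ is the orthogonal complement $U^{\tau'}$ of $U$ with respect to the $\mathbb F_q$-bilinear form $\sigma'(X,Y)=\mathrm{Tr}_{q^4/q}(X_0Y_3+X_3Y_0-X_1Y_2-X_2Y_1)$ on $\mathbb F_{q^4}^4$, where $\mathrm{Tr}_{q^4/q}$ is the trace map from $\mathbb F_{q^4}$ to $\mathbb F_q$. *)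

(* Defs.v *)
From mathcomp Require Import all_boot all_order all_algebra.
Set Implicit Arguments. Unset Strict Implicit. Unset Printing Implicit Defensive.
Import GRing.Theory.
Local Open Scope ring_scope.

Definition vec4 (F : finFieldType) (a b c d : F) : 'rV[F]_4 :=
  \row_(i < 4) nth 0 [:: a; b; c; d] i.

Definition Uset (F : finFieldType) (q : nat) : {set 'rV[F]_4} :=
  [set vec4 x y (x ^+ q + y ^+ (q ^ 2)%N) (x ^+ (q ^ 2)%N + y ^+ q + y ^+ (q ^ 2)%N)
     | x : F, y : F].

Definition Uset' (F : finFieldType) (q : nat) : {set 'rV[F]_4} :=
  [set vec4 z t (z ^+ (q ^ 3)%N + z ^+ (q ^ 2)%N + t ^+ (q ^ 2)%N)
                (z ^+ (q ^ 2)%N + t ^+ (q ^ 3)%N)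
     | z : F, t : F].

(* Main.v *)
Require Import Defs.
From mathcomp Require Import all_boot all_order all_algebra all_field.
From mathcomp Require Import ring.
Set Implicit Arguments. Unset Strict Implicit. Unset Printing Implicit Defensive.
Import GRing.Theory.
Local Open Scope ring_scope.

Notation i0 := (@Ordinal 4 0 isT).
Notation i1 := (@Ordinal 4 1 isT).
Notation i2 := (@Ordinal 4 2 isT).
Notation i3 := (@Ordinal 4 3 isT).

Lemma vec4_mul (F : finFieldType) (a b c d : F) (M : 'M[F]_4) :
  vec4 a b c d *m M =
  vec4 (a * M i0 i0 + b * M i1 i0 + c * M i2 i0 + d * M i3 i0)
       (a * M i0 i1 + b * M i1 i1 + c * M i2 i1 + d * M i3 i1)
       (a * M i0 i2 + b * M i1 i2 + c * M i2 i2 + d * M i3 i2)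
       (a * M i0 i3 + b * M i1 i3 + c * M i2 i3 + d * M i3 i3).
Proof.
apply/rowP => j; rewrite !mxE !big_ord_recr big_ord0 /= add0r !mxE /=.
by case: j => [[|[|[|[|?]]]] Hj] //=; congr (_ + _ + _ + _); congr (_ * M _ _); apply/val_inj.
Qed.

Definition mx01 (F : finFieldType) (L : seq (seq nat)) : 'M[F]_4 :=
  \matrix_(i < 4, j < 4) (nth 0%N (nth [::] L i) j)%:R.

Definition Amx F := mx01 F [:: [:: 0;1;0;1]; [:: 1;0;1;0]; [:: 1;1;0;1]; [:: 0;1;1;0]]%N.
Definition Bmx F := mx01 F [:: [:: 1;0;1;0]; [:: 1;1;1;1]; [:: 1;1;1;0]; [:: 0;1;1;1]]%N.

Section Main.
Variables (F : finFieldType) (h : nat).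
Hypothesis two0 : (2%:R : F) = 0.

Lemma natr_odd n : (n%:R : F) = (odd n)%:R.
Proof.
by rewrite -[in LHS](odd_double_half n) natrD -mul2n natrM two0 mul0r addr0.
Qed.

Lemma AB1 : Amx F *m Bmx F = 1%:M.
Proof.
apply/matrixP => i j; rewrite !mxE !big_ord_recr big_ord0 /= add0r !mxE.
rewrite -!natrM -!natrD natr_odd.
by case: i => [[|[|[|[|?]]]] Hi] //=; case: j => [[|[|[|[|?]]]] Hj].
Qed.

Lemma sq2D (a b : F) : (a + b) ^+ 2 = a ^+ 2 + b ^+ 2.
Proof. by rewrite sqrrD -mulr_natr two0 mulr0 addr0. Qed.

Lemma pow2D n (a b : F) : (a + b) ^+ (2 ^ n) = a ^+ (2 ^ n) + b ^+ (2 ^ n).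
Proof. by elim: n => [|n IH]; rewrite ?expr1 // expnSr !exprM IH sq2D. Qed.

Definition phi (x : F) := x ^+ (2 ^ h).

Lemma phiD a b : phi (a + b) = phi a + phi b.
Proof. exact: pow2D. Qed.

Lemma expq k x : x ^+ ((2 ^ h) ^ k) = iter k phi x.
Proof. by elim: k => [|k IH]; rewrite ?expr1 // expnSr exprM IH. Qed.

Lemma phiE x : x ^+ (2 ^ h) = phi x. Proof. by []. Qed.

Hypothesis cardF : #|F| = ((2 ^ h) ^ 4)%N.

Lemma phi4 x : phi (phi (phi (phi x))) = x.
Proof. by have := expq 4 x; rewrite -cardF expf_card /= => <-. Qed.

Lemma eq2 (W a b : F) : b = a + 2%:R * W -> a = b.
Proof. by move=> ->; rewrite two0 mul0r addr0. Qed.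


Local Notation q := (2 ^ h)%N.
Local Notation p2 x := (phi (phi x)).
Local Notation p3 x := (phi (phi (phi x))).

Lemma dir1 x y :
  vec4 x y (x ^+ q + y ^+ (q ^ 2)%N) (x ^+ (q ^ 2)%N + y ^+ q + y ^+ (q ^ 2)%N) *m Amx F
  \in Uset' F q.
Proof.
rewrite vec4_mul !mxE /=; apply/imset2P.
exists (y + (x ^+ q + y ^+ (q ^ 2)%N))
       (x + (x ^+ q + y ^+ (q ^ 2)%N) + (x ^+ (q ^ 2)%N + y ^+ q + y ^+ (q ^ 2)%N)) => //.
congr vec4; rewrite ?mulr1n ?mulr0n !expq /= !phiE ?phiD ?phi4.
- ring.
- ring.
- apply: (@eq2 (p3 y + x + p3 x + y)); ring.
- apply: (@eq2 (p3 x + y + phi y)); ring.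
Qed.

Lemma dir2 z t :
  vec4 z t (z ^+ (q ^ 3)%N + z ^+ (q ^ 2)%N + t ^+ (q ^ 2)%N) (z ^+ (q ^ 2)%N + t ^+ (q ^ 3)%N) *m Bmx F
  \in Uset F q.
Proof.
rewrite vec4_mul !mxE /=; apply/imset2P.
exists (z + t + (z ^+ (q ^ 3)%N + z ^+ (q ^ 2)%N + t ^+ (q ^ 2)%N))
       (t + (z ^+ (q ^ 3)%N + z ^+ (q ^ 2)%N + t ^+ (q ^ 2)%N) + (z ^+ (q ^ 2)%N + t ^+ (q ^ 3)%N)) => //.
congr vec4; rewrite ?mulr1n ?mulr0n !expq /= ?phiE ?phiD ?phi4.
- ring.
- ring.
- apply: (@eq2 (phi z + phi t + z - p2 z)); ring.
- apply: (@eq2 (p2 t + phi z + 2%:R * z + t + phi t + p3 z)); ring.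
Qed.
End Main.

Theorem proposition4p6 (h : nat) (F : finFieldType) :
  odd h -> #|F| = ((2 ^ h) ^ 4)%N ->
  exists A : 'M[F]_4, A \in unitmx /\
    [set u *m A | u in Uset F (2 ^ h)] = Uset' F (2 ^ h).
Proof.
move=> _ cardF.
have ch : (2 \in [pchar F])%N.
  by apply: (@card_finPcharP _ 2 (h * 4)) => //; rewrite cardF expnM.
have two0 : (2%:R : F) = 0 by apply: pcharf0.
have AB := AB1 two0.
exists (Amx F); split; first by case: (mulmx1_unit AB).
apply/setP => v; apply/imsetP/idP.
- case=> u /imset2P [x y _ _ ->] ->; exact: dir1.
- case/imset2P => z t _ _ -> .
  have Hd := @dir2 F h two0 cardF z t.
  by exists (vec4 z t (z ^+ ((2 ^ h) ^ 3)%N + z ^+ ((2 ^ h) ^ 2)%N + t ^+ ((2 ^ h) ^ 2)%N)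
    (z ^+ ((2 ^ h) ^ 2)%N + t ^+ ((2 ^ h) ^ 3)%N) *m Bmx F) => //;
    rewrite -mulmxA (mulmx1C AB) mulmx1.
Qed.
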